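(* Let $\mathcal{E}_1=[\theta_1,u_1]$ and $\mathcal{E}_2=[\theta_2,u_2]$ be interval effect algebras, each generating its ordered linear space, each having an order-determining set of states, and each unrestricted. If two instruments $\mathcal{I},\mathcal{J}$ from $\mathcal{E}_1$ to $\mathcal{E}_2$ coexist, then the observables $\widehat{\mathcal{I}}$ and $\widehat{\mathcal{J}}$ on $\mathcal{E}_1$ coexist.
   Context: Let $V$ be a real vector space with zero $\theta$ and $K\subseteq V$ a positive cone ($\mathbb{R}^+K\subseteq K$, $K+K\subseteq K$, $K\cap(-K)=\{\theta\}$), ordered by $x\le y$ iff $y-x\in K$. For $u\in K$, $u\ne\theta$, the interval effect algebra is $\mathcal{E}=[\theta,u]=\{x\in K: x\le u\}$; for $a,b\in\mathcal{E}$, $a\perp b$ means $a+b\le u$. $\mathcal{E}$ generates $V$ means $K=\mathbb{R}^+\mathcal{E}$ and $V=K-K$. A state is $s\colon\mathcal{E}\to[0,1]$ with $s(u)=1$ and $s(a+b)=s(a)+s(b)$ whenever $a\perp b$; $\mathcal{S}(\mathcal{E})$ is the set of all states. Order-determining: $a\le b$ iff $s(a)\le s(b)$ for all $s\in\mathcal{S}(\mathcal{E})$. Affine = preserves finite convex combinations. Unrestricted: every affine $f\colon\mathcal{S}(\mathcal{E})\to[0,1]$ has the form $f(s)=s(a)$ for some $a\in\mathcal{E}$. A substate is $\lambda s$ with $\lambda\in[0,1]$, $s\in\mathcal{S}(\mathcal{E})$. An operation from $\mathcal{E}_1$ to $\mathcal{E}_2$ is an affine map $\mathcal{I}\colon\mathcal{S}(\mathcal{E}_1)\to\{\text{substates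 on }\mathcal{E}_2\}$; a channel is an operation with values in $\mathcal{S}(\mathcal{E}_2)$. An observable on $\mathcal{E}$ is a finite family $A=\{A_x:x\in\Omega_A\}\subseteq\mathcal{E}$ with $\sum_x A_x=u$. Observables $A,B$ on $\mathcal{E}$ coexist if there is an observable $C=\{C_{xy}:(x,y)\in\Omega_A\times\Omega_B\}$ on $\mathcal{E}$ with $\sum_y C_{xy}=A_x$ for all $x$ and $\sum_x C_{xy}=B_y$ for all $y$. An instrument from $\mathcal{E}_1$ to $\mathcal{E}_2$ is a finite family $\mathcal{I}=\{\mathcal{I}_x:x\in\Omega_{\mathcal{I}}\}$ of operations from $\mathcal{E}_1$ to $\mathcal{E}_2$ such that the pointwise sum $\sum_x\mathcal{I}_x$ is a channel. For such $\mathcal{I}$, $\widehat{\mathcal{I}}_x\in\mathcal{E}_1$ denotes the unique effect with $s(\widehat{\mathcal{I}}_x)=\mathcal{I}_x(s)(u_2)$ for all $s\in\mathcal{S}(\mathcal{E}_1)$, and $\widehat{\mathcal{I}}=\{\widehat{\mathcal{I}}_x:x\in\Omega_{\mathcal{I}}\}$ is an observable on $\mathcal{E}_1$ (the observable measured by $\mathcal{I}$). Instruments $\mathcal{I}$ (outcome space $\Omega_1$) and $\mathcal{J}$ (outcome space $\Omega_2$) from $\mathcal{E}_1$ to $\mathcal{E}_2$ coexist if there is an instrument $\mathcal{K}=\{\mathcal{K}_{xy}:(x,y)\in\Omega_1\times\Omega_2\}$ from $\mathcal{E}_1$ to $\mathcal{E}_2$ with $\sum_{y}\mathcal{K}_{xy}=\mathcal{I}_x$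 for all $x$ and $\sum_x\mathcal{K}_{xy}=\mathcal{J}_y$ for all $y$. *)

(* Defs.v *)
From HB Require Import structures.
From mathcomp Require Import all_boot all_order all_algebra.
From mathcomp Require Import reals.
Set Implicit Arguments. Unset Strict Implicit. Unset Printing Implicit Defensive.
Import Order.TTheory GRing.Theory Num.Theory.
Local Open Scope ring_scope.

Section OneSpace.
Variables (R : realType) (V : lmodType R) (K : V -> Prop) (u : V).

Definition positive_cone : Prop :=
  [/\ (forall (r : R) x, 0 <= r -> K x -> K (r *: x)),
      (forall x y, K x -> K y -> K (x + y)) &
      (forall x, K x -> K (- x) -> x = 0)].

Definition vle (x y : V) : Prop := K (y - x).

Definition in_E (x : V) : Prop := K x /\ vle x u.

Definition interval_EA : Prop := [/\ positive_cone, K u & u <> 0].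

Definition generates : Prop :=
  (forall x, K x <-> exists (r : R) a, [/\ 0 <= r, in_E a & x = r *: a]) /\
  (forall v, exists x y, [/\ K x, K y & v = x - y]).

(* A state on E, represented canonically as a function V -> R that vanishes
   outside E (values outside E carry no information). *)
Definition is_state (s : V -> R) : Prop :=
  [/\ (forall a, in_E a -> 0 <= s a <= 1),
      (forall a, ~ in_E a -> s a = 0),
      s u = 1 &
      (forall a b, in_E a -> in_E b -> vle (a + b) u -> s (a + b) = s a + s b)].

Definition order_determining : Prop :=
  forall a b, in_E a -> in_E b ->
    (vle a b <-> forall s, is_state s -> s a <= s b).

Definition convex_weights (n : nat) (l : 'I_n -> R) : Prop :=
  (forall i, 0 <= l i) /\ \sum_(i < n) l i = 1.

Definition conv (W : Type) (n : nat) (l : 'I_n -> R) (s : 'I_n -> W -> R) : W -> R :=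
  fun v => \sum_(i < n) l i * s i v.

Definition affine_state_fun (f : (V -> R) -> R) : Prop :=
  forall n (l : 'I_n -> R) (s : 'I_n -> V -> R),
    convex_weights l -> (forall i, is_state (s i)) ->
    f (conv l s) = \sum_(i < n) l i * f (s i).

Definition unrestricted : Prop :=
  forall f : (V -> R) -> R, affine_state_fun f ->
    (forall s, is_state s -> 0 <= f s <= 1) ->
    exists a, in_E a /\ forall s, is_state s -> f s = s a.

Definition is_substate (t : V -> R) : Prop :=
  exists (l : R) s, [/\ 0 <= l <= 1, is_state s & t = (fun v => l * s v)].

Definition observable (T : finType) (A : T -> V) : Prop :=
  (forall x, in_E (A x)) /\ \sum_(x : T) A x = u.

Definition coexist_obs (T1 T2 : finType) (A : T1 -> V) (B : T2 -> V) : Prop :=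
  exists C : T1 * T2 -> V,
    [/\ observable C,
        (forall x, \sum_(y : T2) C (x, y) = A x) &
        (forall y, \sum_(x : T1) C (x, y) = B y)].

End OneSpace.

Section TwoSpaces.
Variables (R : realType) (V1 V2 : lmodType R) (K1 : V1 -> Prop) (u1 : V1)
          (K2 : V2 -> Prop) (u2 : V2).

(* operation: affine map from S(E1) to substates on E2 (only its values on
   states matter) *)
Definition operation (I : (V1 -> R) -> (V2 -> R)) : Prop :=
  (forall s, is_state K1 u1 s -> is_substate K2 u2 (I s)) /\
  (forall n (l : 'I_n -> R) (s : 'I_n -> V1 -> R),
     convex_weights l -> (forall i, is_state K1 u1 (s i)) ->
     I (conv l s) = conv l (fun i => I (s i))).

Definition instrument (T : finType) (I : T -> (V1 -> R) -> (V2 -> R)) : Prop :=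
  (forall x, operation (I x)) /\
  (forall s, is_state K1 u1 s -> is_state K2 u2 (fun w => \sum_(x : T) I x s w)).

(* equality of operations = equality as maps on S(E1) *)
Definition coexist_instr (T1 T2 : finType)
  (I : T1 -> (V1 -> R) -> (V2 -> R)) (J : T2 -> (V1 -> R) -> (V2 -> R)) : Prop :=
  exists Kk : T1 * T2 -> (V1 -> R) -> (V2 -> R),
    [/\ instrument Kk,
        (forall x s, is_state K1 u1 s ->
           (fun w => \sum_(y : T2) Kk (x, y) s w) = I x s) &
        (forall y s, is_state K1 u1 s ->
           (fun w => \sum_(x : T1) Kk (x, y) s w) = J y s)].

Definition measured_obs (T : finType) (I : T -> (V1 -> R) -> (V2 -> R))
  (hatI : T -> V1) : Prop :=
  forall x, in_E K1 u1 (hatI x) /\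
    forall s, is_state K1 u1 s -> s (hatI x) = I x s u2.

End TwoSpaces.

(* Main.v *)
Require Import Defs.
From HB Require Import structures.
From mathcomp Require Import all_boot all_order all_algebra.
From mathcomp Require Import reals.
From Stdlib Require Import ClassicalEpsilon.
Set Implicit Arguments. Unset Strict Implicit.
Import Order.TTheory GRing.Theory Num.Theory.
Local Open Scope ring_scope.

Section Aux.
Variables (R : realType) (V : lmodType R) (K : V -> Prop) (u : V).
Hypothesis hEA : interval_EA K u.
Hypothesis hOD : order_determining K u.

Lemma K0 : K 0.
Proof. case: hEA => [[hs _ _] hu _]; by rewrite -(scale0r u); apply: hs. Qed.

Lemma Eu : in_E K u u.
Proof. case: hEA => _ hu _; split=> //; by rewrite /vle subrr; apply: K0. Qed.

Lemma Ecompl a : in_E K u a -> in_E K u (u - a).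
Proof.
case=> Ka la; split=> //; rewrite /vle.
by have -> : u - (u - a) = a by rewrite opprB addrC subrK.
Qed.

Lemma st_compl s a : is_state K u s -> in_E K u a -> s (u - a) = 1 - s a.
Proof.
move=> [h1 h2 h3 h4] Ea.
have := h4 a (u - a) Ea (Ecompl Ea).
have -> : a + (u - a) = u by rewrite addrC subrK.
rewrite h3 => H; rewrite H; first by rewrite [s a + _]addrC addrK.
by rewrite /vle subrr; apply: K0.
Qed.

Lemma E0 : in_E K u 0.
Proof. case: hEA => _ hu _; split; first exact: K0. by rewrite /vle subr0. Qed.

Lemma st0 s : is_state K u s -> s 0 = 0.
Proof.
move=> [h1 h2 h3 h4].
have := h4 0 0 E0 E0; rewrite addr0 => H.
have : s 0 = s 0 + s 0 by apply: H; rewrite /vle subr0; case: hEA.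
by move=> E; apply/(@addrI _ (s 0)); rewrite addr0 -E.
Qed.

Lemma Epair a b : in_E K u a -> in_E K u b ->
  (forall s, is_state K u s -> s a + s b <= 1) -> in_E K u (a + b).
Proof.
move=> Ea Eb H.
have Hle : vle K b (u - a).
  apply/(hOD Eb (Ecompl Ea)) => s hs.
  rewrite (st_compl hs Ea) lerBrDl; exact: H.
split; last by move: Hle; rewrite /vle opprD addrA.
case: hEA => [[_ hp _] _ _]; apply: hp; [case: Ea | case: Eb] => //.
Qed.

Lemma Eseq (I : Type) (r : seq I) (F : I -> V) :
  (forall i, in_E K u (F i)) ->
  (forall s, is_state K u s -> \sum_(i <- r) s (F i) <= 1) ->
  in_E K u (\sum_(i <- r) F i) /\
  (forall s, is_state K u s -> s (\sum_(i <- r) F i) = \sum_(i <- r) s (F i)).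
Proof.
move=> HE; elim: r => [|x r IH] H.
  split; first by rewrite big_nil; exact: E0.
  by move=> s hs; rewrite !big_nil; exact: st0.
have nn : forall s, is_state K u s -> 0 <= s (F x).
  by move=> s [h1 _ _ _]; case/andP: (h1 _ (HE x)).
have [IH1 IH2] : in_E K u (\sum_(i <- r) F i) /\
  (forall s, is_state K u s -> s (\sum_(i <- r) F i) = \sum_(i <- r) s (F i)).
  apply: IH => s hs; apply: le_trans (H s hs); rewrite big_cons lerDr; exact: nn.
have Hp : forall s, is_state K u s -> s (F x) + s (\sum_(i <- r) F i) <= 1.
  by move=> s hs; rewrite IH2 //; move: (H s hs); rewrite big_cons.
have Ep := Epair (HE x) IH1 Hp.
split; rewrite big_cons //.
move=> s hs; rewrite big_cons; case: (hs) => _ _ _ h4.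
by rewrite h4 // ?IH2 //; case: Ep.
Qed.

Lemma Eeq a b : in_E K u a -> in_E K u b ->
  (forall s, is_state K u s -> s a = s b) -> a = b.
Proof.
move=> Ea Eb H.
have h1 : vle K a b by apply/(hOD Ea Eb) => s hs; rewrite H.
have h2 : vle K b a by apply/(hOD Eb Ea) => s hs; rewrite H.
case: hEA => [[_ _ ha] _ _].
apply/esym/subr0_eq/ha => //; by rewrite opprB.
Qed.

End Aux.

Theorem lemma3p2 (R : realType) (V1 V2 : lmodType R)
  (K1 : V1 -> Prop) (u1 : V1) (K2 : V2 -> Prop) (u2 : V2)
  (T1 T2 : finType)
  (I : T1 -> (V1 -> R) -> (V2 -> R)) (J : T2 -> (V1 -> R) -> (V2 -> R))
  (hatI : T1 -> V1) (hatJ : T2 -> V1) :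
  interval_EA K1 u1 -> generates K1 u1 -> order_determining K1 u1 ->
  unrestricted K1 u1 ->
  interval_EA K2 u2 -> generates K2 u2 -> order_determining K2 u2 ->
  unrestricted K2 u2 ->
  instrument K1 u1 K2 u2 I -> instrument K1 u1 K2 u2 J ->
  measured_obs K1 u1 u2 I hatI -> measured_obs K1 u1 u2 J hatJ ->
  coexist_instr K1 u1 K2 u2 I J ->
  coexist_obs K1 u1 hatI hatJ.
Proof.
move=> EA1 _ OD1 UN1 _ _ _ _ _ _ MI MJ [Kk [[Kop Ktot] HI HJ]].
have HC : forall p, exists c, in_E K1 u1 c /\
    forall s, is_state K1 u1 s -> Kk p s u2 = s c.
  move=> p; apply: UN1.
    by move=> n l s hl hs; case: (Kop p) => _ ->.
  move=> s hs; case: (Kop p) => hsub _.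
  case: (hsub s hs) => l [s' [hl hs' ->]].
  by case: hs' => _ _ -> _; rewrite mulr1.
pose C p := proj1_sig (constructive_indefinite_description _ (HC p)).
have CE p : in_E K1 u1 (C p) by case: (proj2_sig (constructive_indefinite_description _ (HC p))).
have CS p s : is_state K1 u1 s -> s (C p) = Kk p s u2.
  by move=> hs; case: (proj2_sig (constructive_indefinite_description _ (HC p))) => _ ->.
have Cmarg (T : finType) (r : seq T) (f : T -> T1 * T2) (G : (V1 -> R) -> V2 -> R) :
    (forall s, is_state K1 u1 s -> \sum_(i <- r) Kk (f i) s u2 = G s u2) ->
    (forall s, is_state K1 u1 s -> G s u2 <= 1) ->
    in_E K1 u1 (\sum_(i <- r) C (f i)) /\
    forall s, is_state K1 u1 s -> s (\sum_(i <- r) C (f i)) = G s u2.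
  move=> H1 H2.
  have [A B] : in_E K1 u1 (\sum_(i <- r) C (f i)) /\
    (forall s, is_state K1 u1 s -> s (\sum_(i <- r) C (f i)) = \sum_(i <- r) s (C (f i))).
    apply: (Eseq EA1 OD1) => [i|s hs]; first exact: CE.
    rewrite (eq_bigr (fun i => Kk (f i) s u2)) ?H1 ?H2 // => i _; exact: CS.
  split=> // s hs; rewrite B //; rewrite -H1 //; apply: eq_bigr => i _; exact: CS.
exists C; split.
- split=> //.
  have Hb : forall s, is_state K1 u1 s -> (fun w => \sum_(p : T1 * T2) Kk p s w) u2 <= 1.
    by move=> s hs; case: (Ktot s hs) => _ _ -> _.
  have [A B] := Cmarg _ (index_enum (T1 * T2)%type) id (fun s w => \sum_(p : T1 * T2) Kk p s w)
    (fun s hs => erefl) Hb.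
  apply: (Eeq EA1 OD1 A (Eu EA1)) => s hs; rewrite B //.
  by case: (Ktot s hs) => _ _ -> _; case: hs => _ _ -> _.
- move=> x.
  have Hb : forall s, is_state K1 u1 s -> I x s u2 <= 1.
    move=> s hs; rewrite -(proj2 (MI x)) //; case: hs => h1 _ _ _.
    by case/andP: (h1 _ (proj1 (MI x))).
  have [A B] := Cmarg _ (index_enum T2) (fun y => (x, y)) (I x)
    (fun s hs => f_equal (fun g => g u2) (HI x s hs)) Hb.
  apply: (Eeq EA1 OD1 A (proj1 (MI x))) => s hs; rewrite B //.
  by rewrite (proj2 (MI x)).
- move=> y.
  have Hb : forall s, is_state K1 u1 s -> J y s u2 <= 1.
    move=> s hs; rewrite -(proj2 (MJ y)) //; case: hs => h1 _ _ _.
    by case/andP: (h1 _ (proj1 (MJ y))).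
  have [A B] := Cmarg _ (index_enum T1) (fun x => (x, y)) (J y)
    (fun s hs => f_equal (fun g => g u2) (HJ y s hs)) Hb.
  apply: (Eeq EA1 OD1 A (proj1 (MJ y))) => s hs; rewrite B //.
  by rewrite (proj2 (MJ y)).
Qed.
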